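(* Let $\Bbbk$ be a field and let $I\subseteq \Bbbk[x,y,z]$ be a monomial ideal generated in degree $d$ having a linear resolution, with minimal monomial generators $m_1,\ldots,m_r$ listed in tree ordering. For $2\le j\le r$ let $I_j=(m_1,\ldots,m_j)$. If $u,v\in\mathcal G(I_j)$ are on the same level (i.e. $\deg_z u=\deg_z v$), then the graph $G_{I_j}(u,v)$ is connected.
   Context: $\mathcal G(J)$ is the minimal monomial generating set of a monomial ideal $J$. The dual graph $G_J$ has vertex set $\mathcal G(J)$, with $\{f,g\}$ an edge iff $\deg\operatorname{lcm}(f,g)=\deg f+1=\deg g+1$; $G_J(f,g)$ is the induced subgraph of $G_J$ on the generators of $J$ dividing $\operatorname{lcm}(f,g)$. A monomial is on the $c$-th level if its $z$-degree is $c$. Tree ordering (for $I$ generated in degree $d$ and linearly presented, so its generators occupy consecutive levels $c,c+1,\ldots,c+p-1$): the generators are ordered level by level in increasing $z$-degree. On level $c$, generators are ordered by strictly decreasing $x$-degree. For $0<i<p$, on level $c+i$, let $m_{i,1}$ be the generator on level $c+i$ of highest $x$-degree that is joined by an edge of $G_I$ to some generator on level $c+i-1$; put $m_{i,1}$ first, then the generators on level $c+i$ with $x$-degree smaller than that of $m_{i,1}$ in decreasing order of $x$-degree, then the remaining generators on level $c+i$ in increasing order of $x$-degree. *)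

(* Defs.v *)
From HB Require Import structures.
From mathcomp Require Import all_boot all_order all_algebra.

Set Implicit Arguments.
Unset Strict Implicit.
Unset Printing Implicit Defensive.

Import GRing.Theory.

(* A monomial x^a y^b z^c of k[x,y,z] is encoded by its exponent triple (a,b,c). *)
Definition mon := (nat * nat * nat)%type.

Definition xdeg (m : mon) : nat := m.1.1.
Definition ydeg (m : mon) : nat := m.1.2.
Definition zdeg (m : mon) : nat := m.2.

Definition ex (m : mon) (i : nat) : nat :=
  match i with 0 => xdeg m | 1 => ydeg m | _ => zdeg m end.

Definition mdeg (m : mon) : nat := (xdeg m + ydeg m + zdeg m)%N.

Definition mdivides (f g : mon) : bool :=
  [&& xdeg f <= xdeg g, ydeg f <= ydeg g & zdeg f <= zdeg g].

Definition mlcm (f g : mon) : mon :=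
  (maxn (xdeg f) (xdeg g), maxn (ydeg f) (ydeg g), maxn (zdeg f) (zdeg g)).

(* A monomial ideal J is given by a finite list of monomial generators. *)
Definition in_ideal (J : seq mon) (m : mon) : bool := has (fun g => mdivides g m) J.

Definition mingens (J : seq mon) : seq mon :=
  [seq h <- undup J | ~~ has (fun g => (g != h) && mdivides g h) J].

Definition dual_edge (f g : mon) : bool :=
  (mdeg (mlcm f g) == (mdeg f).+1) && (mdeg (mlcm f g) == (mdeg g).+1).

Definition GJfg_vertices (J : seq mon) (f g : mon) : seq mon :=
  [seq h <- mingens J | mdivides h (mlcm f g)].

Definition induced_connected (V : seq mon) : Prop :=
  forall a b, a \in V -> b \in V ->
    exists p : seq mon, path (fun x y => dual_edge x y && (y \in V)) a p /\ last a p = b.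

Definition v3 (n : nat) : 'I_3 := inord n.

Definition bsub (b : mon) (F : {set 'I_3}) : mon :=
  (xdeg b - (v3 0 \in F), ydeg b - (v3 1 \in F), zdeg b - (v3 2 \in F))%N.

Definition koszul (J : seq mon) (b : mon) : {set {set 'I_3}} :=
  [set F : {set 'I_3} | [forall i : 'I_3, (i \in F) ==> (0 < ex b i)%N]
                        && in_ideal J (bsub b F)].

Definition faces (D : {set {set 'I_3}}) (n : nat) : seq {set 'I_3} :=
  [seq F <- enum D | #|F : {set 'I_3}| == n].

Definition bd (k : fieldType) (D : {set {set 'I_3}}) (n : nat)
  : 'M[k]_(size (faces D n.+1), size (faces D n)) :=
  \matrix_(p, q)
    (let F := nth set0 (faces D n.+1) p in
     let G := nth set0 (faces D n) q in
     if G \subset F then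
       (\sum_(v in F :\: G) (-1) ^+ #|[set w in F | (nat_of_ord w < nat_of_ord v)%N]|)%R
     else 0%R).

(* dim_k of reduced homology  H~_{n-1}(D; k) *)
Definition hdim (k : fieldType) (D : {set {set 'I_3}}) (n : nat) : nat :=
  (size (faces D n) - (if n is m.+1 then \rank (bd k D m) else 0) - \rank (bd k D n))%N.

(* beta_{i,b}(J) = dim_k H~_{i-1}(K^b(J); k)   (Miller--Sturmfels, Thm 1.34) *)
Definition betti (k : fieldType) (J : seq mon) (i : nat) (b : mon) : nat :=
  hdim k (koszul J b) i.

Definition linear_resolution (k : fieldType) (d : nat) (J : seq mon) : Prop :=
  forall (i : nat) (b : mon), betti k J i b <> 0%N -> mdeg b = (d + i)%N.

Definition level (ms : seq mon) (l : nat) : seq mon := [seq m <- ms | zdeg m == l].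

Definition below (s : seq mon) (m1 : mon) : seq mon := [seq m <- s | xdeg m < xdeg m1].
Definition above (s : seq mon) (m1 : mon) : seq mon := [seq m <- s | xdeg m1 < xdeg m].

Definition tree_ordered (ms : seq mon) : Prop :=
  sorted (fun a b => zdeg a <= zdeg b) ms /\
  let c := zdeg (head (0, 0, 0)%N ms) in
  sorted (fun a b => xdeg b < xdeg a) (level ms c) /\
  forall l : nat, (c < l)%N -> level ms l != [::] ->
    exists m1 : mon,
      [/\ m1 \in level ms l,
          has (dual_edge m1) (level ms l.-1),
          (forall m, m \in level ms l -> has (dual_edge m) (level ms l.-1) ->
             xdeg m <= xdeg m1),
          level ms l = m1 :: (below (level ms l) m1 ++ above (level ms l) m1)
        & sorted (fun a b => xdeg b < xdeg a) (below (level ms l) m1)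
          /\ sorted (fun a b => xdeg a < xdeg b) (above (level ms l) m1)].

(* Main.v *)
Require Import Defs.
From mathcomp Require Import all_boot all_order all_algebra.
From mathcomp Require Import zify.
From Stdlib Require Import Classical ClassicalEpsilon.
Set Implicit Arguments.
Unset Strict Implicit.
Unset Printing Implicit Defensive.

Ltac mono_tac := rewrite /mdivides /mdeg /mlcm /ex /xdeg /ydeg /zdeg /=.

Lemma mdiv_trans f g h : mdivides f g -> mdivides g h -> mdivides f h.
Proof.
case: f => [[f1 f2] f3]; case: g => [[g1 g2] g3]; case: h => [[h1 h2] h3].
mono_tac. lia.
Qed.

Lemma mdiv_eq f g : mdivides f g -> mdeg g <= mdeg f -> f = g.
Proof.
case: f => [[f1 f2] f3]; case: g => [[g1 g2] g3].
mono_tac => H1 H2.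
have e1 : f1 = g1 by lia. have e2 : f2 = g2 by lia. have e3 : f3 = g3 by lia.
by rewrite e1 e2 e3.
Qed.

Lemma mdiv_deg f g : mdivides f g -> mdeg f <= mdeg g.
Proof. case: f => [[f1 f2] f3]; case: g => [[g1 g2] g3]; mono_tac; lia. Qed.

Lemma mdiv_lcml f g : mdivides f (mlcm f g).
Proof. case: f => [[f1 f2] f3]; case: g => [[g1 g2] g3]; mono_tac; lia. Qed.
Lemma mdiv_lcmr f g : mdivides g (mlcm f g).
Proof. case: f => [[f1 f2] f3]; case: g => [[g1 g2] g3]; mono_tac; lia. Qed.
Lemma mdiv_lcm f g h : mdivides f h -> mdivides g h -> mdivides (mlcm f g) h.
Proof. case: f => [[f1 f2] f3]; case: g => [[g1 g2] g3]; case: h => [[h1 h2] h3]; mono_tac; lia. Qed.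

Lemma dual_edge_sym f g : dual_edge f g = dual_edge g f.
Proof.
rewrite /dual_edge andbC; congr (_ && _); congr (_ == _); congr mdeg;
case: f => [[f1 f2] f3]; case: g => [[g1 g2] g3]; rewrite /mlcm /xdeg /ydeg /zdeg /=;
by rewrite maxnC [maxn f2 _]maxnC [maxn f3 _]maxnC.
Qed.

Definition dec (b : mon) (a : nat) : mon :=
  (xdeg b - (a == 0), ydeg b - (a == 1), zdeg b - (a == 2)).
Definition dec2 (b : mon) (m : nat) : mon :=
  (xdeg b - (m != 0), ydeg b - (m != 1), zdeg b - (m != 2)).

Lemma dec_div b a : mdivides (dec b a) b.
Proof. case: b => [[b1 b2] b3]; rewrite /dec; mono_tac; lia. Qed.

Lemma dec_deg b a : a < 3 -> 0 < ex b a -> mdeg (dec b a) < mdeg b.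
Proof.
case: b => [[b1 b2] b3]; rewrite /dec; case: a => [|[|[|a]]] //= _; mono_tac; lia.
Qed.

Lemma dec2_div b m a : a != m -> mdivides (dec2 b m) (dec b a).
Proof.
case: b => [[b1 b2] b3]; rewrite /dec /dec2;
case: a => [|[|[|a]]]; case: m => [|[|[|m]]] //= _; mono_tac; lia.
Qed.

Lemma cover h b : mdivides h b -> mdeg h < mdeg b ->
  exists a, [/\ a < 3, 0 < ex b a & mdivides h (dec b a)].
Proof.
case: h => [[h1 h2] h3]; case: b => [[b1 b2] b3]; rewrite /dec; mono_tac => H1 H2.
case: (ltnP h1 b1) => c1; first by exists 0; split => //=; lia.
case: (ltnP h2 b2) => c2; first by exists 1; split => //=; lia.
case: (ltnP h3 b3) => c3; first by exists 2; split => //=; lia.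
lia.
Qed.

Lemma size_faces (D : {set {set 'I_3}}) n :
  size (faces D n) = #|[set F in D | #|F| == n]|.
Proof.
rewrite /faces cardE /enum_mem -filter_predI /=.
apply: congr1; apply: eq_filter => x /=. by rewrite !inE andbC.
Qed.

Lemma card3 (P : pred 'I_3) : #|[set m | P m]| = (P (v3 0) + P (v3 1) + P (v3 2))%N.
Proof.
rewrite -sum1_card big_mkcond /= !big_ord_recr big_ord0 /= !inE.
set a := widen_ord _ _; set b := widen_ord _ _; set c := ord_max.
have -> : a = v3 0 by apply: val_inj; rewrite /= inordK.
have -> : b = v3 1 by apply: val_inj; rewrite /= inordK.
have -> : c = v3 2 by apply: val_inj; rewrite /= inordK.
by case: (P _); case: (P _); case: (P _).
Qed.

Lemma c1 (D : {set {set 'I_3}}) : #|[set F in D | #|F| == 1]| = #|[set m | [set m] \in D]|.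
Proof.
have -> : [set F in D | #|F| == 1] = [set [set m] | m in [set m | [set m] \in D]].
  apply/setP => F; rewrite !inE; apply/andP/imsetP.
    by case=> FD /cards1P [x Fx]; exists x; rewrite // inE -Fx.
  by case=> x; rewrite inE => xD ->; rewrite xD cards1.
by rewrite card_imset //; apply: set1_inj.
Qed.

Lemma c2 (D : {set {set 'I_3}}) : #|[set F in D | #|F| == 2]| = #|[set m | ~: [set m] \in D]|.
Proof.
have -> : [set F in D | #|F| == 2] = [set ~: [set m] | m in [set m | ~: [set m] \in D]].
  apply/setP => F; rewrite !inE; apply/andP/imsetP.
    case=> FD F2. have : #|~: F| == 1 by rewrite cardsCs setCK card_ord (eqP F2).
    by case/cards1P => x Fx; exists x; [rewrite inE -Fx setCK | rewrite -Fx setCK].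
  by case=> x; rewrite inE => xD ->; rewrite xD cardsCs setCK cards1 card_ord.
by rewrite card_imset //; move=> x y /setC_inj; apply: set1_inj.
Qed.

Lemma c0 (D : {set {set 'I_3}}) : #|[set F in D | #|F| == 0]| <= 1.
Proof.
apply: (@leq_trans #|[set (set0 : {set 'I_3})]|); last by rewrite cards1.
apply: subset_leq_card; apply/subsetP => F.
by rewrite !inE => /andP[_ /eqP/cards0_eq ->].
Qed.

Lemma hdim_pos (k : fieldType) (D : {set {set 'I_3}}) :
  #|[set m | ~: [set m] \in D]| + 2 <= #|[set m | [set m] \in D]| ->
  0 < hdim k D 1.
Proof.
move=> H; rewrite /hdim.
move: (rank_leq_col (bd k D 0)) (rank_leq_row (bd k D 1)).
move: (\rank (bd k D 0)) (\rank (bd k D 1)) => x0 x1.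
rewrite !size_faces c1 c2 => r0 r1.
have := c0 D. lia.
Qed.

Lemma v3_eq a c : a < 3 -> c < 3 -> (v3 a == v3 c) = (a == c).
Proof. by move=> Ha Hc; rewrite -val_eqE /= !inordK. Qed.

Lemma v3K a : a < 3 -> nat_of_ord (v3 a) = a.
Proof. by move=> Ha; rewrite /v3 inordK. Qed.

Lemma kos1 J b a : a < 3 ->
  ([set v3 a] \in koszul J b) = (0 < ex b a) && in_ideal J (dec b a).
Proof.
move=> Ha; rewrite inE; congr andb.
  apply/forallP/idP.
    by move=> /(_ (v3 a)); rewrite in_set1 eqxx /= v3K.
  move=> H i; apply/implyP; rewrite in_set1 => /eqP ->; by rewrite v3K.
rewrite /bsub /dec !in_set1 !v3_eq //.
by rewrite ![_ == a]eq_sym.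
Qed.

Lemma kos2 J b m : m < 3 -> (~: [set v3 m] \in koszul J b) ->
  in_ideal J (dec2 b m) /\ (forall a, a < 3 -> a != m -> 0 < ex b a).
Proof.
move=> Hm; rewrite inE => /andP[/forallP H1 H2]; split.
  move: H2; rewrite /bsub /dec2 !in_setC !in_set1 !v3_eq //.
  by rewrite ![_ == m]eq_sym.
move=> a Ha Ham; move: (H1 (v3 a)); rewrite in_setC in_set1 v3_eq // Ham /=.
by rewrite v3K.
Qed.

Definition conn (W : pred mon) (a c : mon) : Prop :=
  exists p, [/\ W a, all W p, path dual_edge a p & last a p = c].

Lemma conn_refl (W : pred mon) a : W a -> conn W a a.
Proof. by move=> Wa; exists [::]. Qed.

Lemma conn_trans (W : pred mon) a b c : conn W a b -> conn W b c -> conn W a c.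
Proof.
case=> p [Wa Wp Pp Lp]; case=> q [Wb Wq Pq Lq]; exists (p ++ q); split=> //.
- by rewrite all_cat Wp.
- by rewrite cat_path Pp Lp.
- by rewrite last_cat Lp.
Qed.

Lemma conn_sym (W : pred mon) a c : conn W a c -> conn W c a.
Proof.
case=> p; elim: p a => [|y p IH] a [Wa Wp Pp Lp] /=.
  by rewrite /= in Lp; rewrite -Lp; apply: conn_refl.
move: Wp Pp => /= /andP[Wy Wp] /andP[ay Pp].
apply: (@conn_trans _ _ y); first by apply: IH; split.
exists [:: a]; split => //=; first by rewrite Wa.
by rewrite dual_edge_sym ay.
Qed.

Lemma conn_mono (W W' : pred mon) a c :
  (forall x, W x -> W' x) -> conn W a c -> conn W' a c.
Proof.
move=> sub [p [Wa Wp Pp Lp]]; exists p; split => //; first by apply: sub.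
by apply: sub_all Wp => x; apply: sub.
Qed.

Definition Vb (ms : seq mon) (b : mon) : pred mon :=
  fun h => (h \in ms) && mdivides h b.

Lemma boolcount (s0 s1 s2 p0 p1 p2 r0 r1 r2 : bool) :
 [|| s0 && r0, s1 && r1 | s2 && r2] -> [|| s0 && ~~r0, s1 && ~~r1 | s2 && ~~r2] ->
 (p0 -> [&& s1, s2 & r1 == r2]) -> (p1 -> [&& s0, s2 & r0 == r2]) ->
 (p2 -> [&& s0, s1 & r0 == r1]) ->
 p0 + p1 + p2 + 2 <= s0 + s1 + s2.
Proof.
move: s0 s1 s2 p0 p1 p2 r0 r1 r2.
by do 9! case; move=> //= H1 H2 H3 H4 H5; (try by move: (H3 isT)); (try by move: (H4 isT)); (try by move: (H5 isT)).
Qed.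

Section Main.
Variables (k : fieldType) (d : nat) (ms : seq mon).
Hypothesis Deg : all (fun m => mdeg m == d) ms.
Hypothesis LR : linear_resolution k d ms.

Lemma degP m : m \in ms -> mdeg m = d.
Proof. by move=> mi; apply/eqP; apply: (allP Deg). Qed.

Lemma core u v : u \in ms -> v \in ms ->
  (forall g h, g \in ms -> h \in ms -> mdeg (mlcm g h) < mdeg (mlcm u v) ->
     conn (Vb ms (mlcm g h)) g h) ->
  conn (Vb ms (mlcm u v)) u v.
Proof.
move=> um vm IH.
set b := mlcm u v; set W := Vb ms b.
have uW : W u by rewrite /W /Vb um mdiv_lcml.
have vW : W v by rewrite /W /Vb vm mdiv_lcmr.
case: (eqVneq u v) => [<- | neq]; first by apply: conn_refl.
case E: (dual_edge u v).
  by exists [:: v]; split => //=; rewrite ?vW ?E.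
case: (classic (conn W u v)) => // nc; exfalso.
have du := degP um; have dv := degP vm.
have degb : mdeg b != d.+1.
  apply/negP => /eqP db; move: E; rewrite /dual_edge -/b db du dv eqxx //.
have bgt : d < mdeg b.
  rewrite ltnNge; apply/negP => bd.
  have ub : u = b by apply: mdiv_eq; [apply: mdiv_lcml | rewrite du].
  have vb : v = b by apply: mdiv_eq; [apply: mdiv_lcmr | rewrite dv].
  by move: neq; rewrite ub vb eqxx.
have IHloc : forall a, a < 3 -> 0 < ex b a -> forall g h,
    Vb ms (dec b a) g -> Vb ms (dec b a) h -> conn W g h.
  move=> a Ha Hb g h /andP[gm gd] /andP[hm hd].
  have Hl : mdivides (mlcm g h) (dec b a) by apply: mdiv_lcm.
  apply: (@conn_mono (Vb ms (mlcm g h))).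
    move=> x /andP[xm xd]; rewrite /W /Vb xm /=.
    by apply: (mdiv_trans xd); apply: (mdiv_trans Hl); apply: dec_div.
  apply: IH => //.
  by apply: (leq_ltn_trans (mdiv_deg Hl)); apply: dec_deg.
pose R a := exists g, Vb ms (dec b a) g /\ conn W u g.
have [r Hr] : exists r : nat -> bool, forall a, r a <-> R a.
  exists (fun a => if excluded_middle_informative (R a) then true else false).
  by move=> a; case: excluded_middle_informative.
have LR1 : betti k ms 1 b <> 0 -> mdeg b = (d + 1)%N by apply: LR.
move/eqP: degb; apply; rewrite -addn1; apply: LR1; rewrite /betti.
suff : 0 < hdim k (koszul ms b) 1 by case: (hdim _ _ _).
apply: hdim_pos; rewrite !card3.
set K := koszul ms b.
have sE : forall a, a < 3 -> ([set v3 a] \in K) = (0 < ex b a) && in_ideal ms (dec b a).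
  by move=> a Ha; rewrite kos1.
have cov : forall w, W w -> exists a, [/\ a < 3, [set v3 a] \in K & Vb ms (dec b a) w].
  move=> w /andP[wm wb].
  have [|a [Ha Hpos Hd]] := cover wb; first by rewrite (degP wm).
  exists a; split => //; last by rewrite /Vb wm Hd.
  by rewrite sE // Hpos; apply/hasP; exists w.
have Hpair : forall m a c, m < 3 -> a < 3 -> c < 3 -> a != m -> c != m ->
    ~: [set v3 m] \in K -> [&& [set v3 a] \in K, [set v3 c] \in K & r a == r c].
  move=> m a c Hm Ha Hc am cm /(kos2 Hm) [/hasP [h hm hd] Hex].
  have hA : Vb ms (dec b a) h by rewrite /Vb hm (mdiv_trans hd) // dec2_div.
  have hC : Vb ms (dec b c) h by rewrite /Vb hm (mdiv_trans hd) // dec2_div.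
  rewrite !sE // !Hex //=.
  apply/andP; split; first by apply/hasP; exists h => //; case/andP: hA.
  apply/andP; split; first by apply/hasP; exists h => //; case/andP: hC.
  apply/eqP; apply/idP/idP.
  - move=> /Hr [g [gA ug]]; apply/Hr; exists h; split => //.
    by apply: (conn_trans ug); apply: IHloc gA hA => //; apply: Hex.
  - move=> /Hr [g [gC ug]]; apply/Hr; exists h; split => //.
    by apply: (conn_trans ug); apply: IHloc gC hC => //; apply: Hex.
apply: boolcount (r 0) (r 1) (r 2) _ _ _ _ _.
- have [a [Ha sa aV]] := cov u uW.
  have ra : r a by apply/Hr; exists u; split => //; apply: conn_refl.
  by move: Ha sa ra; clear aV; case: a => [|[|[|a]]] //= _ -> ->; rewrite ?orbT.
- have [a [Ha sa aV]] := cov v vW.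
  have ra : ~~ r a.
    apply/negP => /Hr [g [gA ug]]; apply: nc; apply: (conn_trans ug).
    apply: IHloc aV => //.
    by move: sa; rewrite sE // => /andP[].
  by move: Ha sa ra; clear aV; case: a => [|[|[|a]]] //= _ -> ->; rewrite ?orbT.
- by apply: Hpair.
- by apply: Hpair.
- by apply: Hpair.
Qed.

Lemma main_conn n u v : u \in ms -> v \in ms -> mdeg (mlcm u v) <= n ->
  conn (Vb ms (mlcm u v)) u v.
Proof.
elim: n u v => [|n IH] u v um vm Hn; apply: core => // g h gm hm Hd.
  by move: (leq_trans Hd Hn).
by apply: IH => //; rewrite -ltnS (leq_trans Hd Hn).
Qed.

End Main.

Lemma index_take_lt (T : eqType) (s : seq T) j x : x \in take j s -> index x s < j.
Proof.
move=> xt; rewrite -(cat_take_drop j s) index_cat xt.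
have := index_mem x (take j s); rewrite xt size_take_min => H; lia.
Qed.

Lemma index_lt_take (T : eqType) (s : seq T) j x : x \in s -> index x s < j -> x \in take j s.
Proof.
move=> xs H; apply/negPn/negP => nt.
case: (leqP (size s) j) => sj.
  by move: nt; rewrite take_oversize // xs.
move: H; rewrite -(cat_take_drop j s) index_cat (negPf nt) size_take_min.
lia.
Qed.

Lemma index_filter_lt (T : eqType) (P : pred T) (s : seq T) x y :
  P x -> P y -> x \in s -> y \in s ->
  index x s < index y s -> index x (filter P s) < index y (filter P s).
Proof.
move=> Px Py; elim: s => [|z s IH] //= xs ys.
case Pz: (P z) => /=.
  case: (eqVneq z x) => [zx|zx].
    subst z; case: (eqVneq x y) => [xy|zy]; first by subst x; rewrite ?eqxx ?ltnn.
    by rewrite ?eqxx ?(negPf zy).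
  rewrite ?(negPf zx); case: (eqVneq z y) => [zy|zy]; first by subst z; rewrite ?eqxx.
  rewrite ?(negPf zy) !ltnS; apply: IH.
    by move: xs; rewrite inE eq_sym (negPf zx).
  by move: ys; rewrite inE eq_sym (negPf zy).
case: (eqVneq z x) => [zx|zx]; first by move: Pz; rewrite zx Px.
case: (eqVneq z y) => [zy|zy]; first by move: Pz; rewrite zy Py.
rewrite ?(negPf zx) ?(negPf zy) ltnS; apply: IH.
  by move: xs; rewrite inE eq_sym (negPf zx).
by move: ys; rewrite inE eq_sym (negPf zy).
Qed.

Lemma interval ms u v h :
  tree_ordered ms -> u \in ms -> v \in ms -> h \in ms ->
  zdeg u = zdeg h -> zdeg v = zdeg h ->
  index u ms < index h ms -> index v ms < index h ms ->
  ~ (xdeg u < xdeg h /\ xdeg h < xdeg v).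
Proof.
move=> [Sz [Sc Lv]] um vm hm zu zv iu iv [xu xv].
set e := zdeg h; set L := level ms e.
have uL : u \in L by rewrite mem_filter zu eqxx.
have vL : v \in L by rewrite mem_filter zv eqxx.
have hL : h \in L by rewrite mem_filter eqxx.
have iuL : index u L < index h L by apply: index_filter_lt => //=; rewrite ?zu ?zv eqxx.
have ivL : index v L < index h L by apply: index_filter_lt => //=; rewrite ?zu ?zv eqxx.
set c := zdeg (head (0, 0, 0)%N ms).
have ce : c <= e.
  case: ms Sz hm {Sc Lv um vm iu iv uL vL hL iuL ivL L} @c => [|m0 r] // Sz hm /=.
  have tr : transitive (fun a b : mon => zdeg a <= zdeg b).
    by move=> x y z; apply: leq_trans.
  have rf : reflexive (fun a b : mon => zdeg a <= zdeg b) by move=> x; apply: leqnn.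
  have Hs := sorted_leq_index tr rf Sz.
  apply: (Hs m0 h) => //; first by rewrite inE eqxx.
  by rewrite /= eqxx.
have trgt : transitive (fun a b : mon => xdeg b < xdeg a).
  by move=> x y z H1 H2; apply: ltn_trans H1.
have trlt : transitive (fun a b : mon => xdeg a < xdeg b).
  by move=> x y z H1 H2; apply: ltn_trans H2.
case: (ltngtP c e) ce => // ce _.
  have Lne : L != [::] by apply/eqP => LE; move: hL; rewrite LE.
  have [m1 [m1L _ _ Leq [sB sA]]] := Lv e ce Lne.
  rewrite -/L in Leq sB sA.
  set B := below L m1 in Leq sB; set A := above L m1 in Leq sA.
  have hm1 : h != m1.
    apply/eqP => hE; move: iuL; rewrite Leq hE /= eqxx //.
  have side : forall w, w \in L -> index w L < index h L ->
      if h \in B then xdeg h < xdeg w else xdeg w < xdeg h.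
    move=> w wL; rewrite Leq /= (eq_sym m1 h) (negPf hm1).
    case: (eqVneq m1 w) => [<-|m1w].
      move=> _; case: ifP; first by rewrite mem_filter => /andP[].
      move=> hB; have : h \in B ++ A by move: hL; rewrite Leq inE (negPf hm1).
      by rewrite mem_cat hB /= mem_filter => /andP[].
    rewrite ltnS !index_cat.
    have wBA : w \in B ++ A by move: wL; rewrite Leq inE eq_sym (negPf m1w).
    case hB: (h \in B) => /=.
      case wB: (w \in B) => /=.
        by move=> H; apply: (sorted_ltn_index trgt sB).
      move=> H; have H2 : index h B < size B by rewrite index_mem hB.
      have H3 := leq_ltn_trans (leq_addr (index w A) (size B)) H.
      by move: (ltn_trans H3 H2); rewrite ltnn.
    have hA : h \in A by move: hL; rewrite Leq inE (negPf hm1) mem_cat hB.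
    have xh : xdeg m1 < xdeg h by move: hA; rewrite mem_filter => /andP[].
    case wB: (w \in B) => /=.
      by move=> _; move: wB; rewrite mem_filter => /andP[H _]; apply: ltn_trans xh.
    have wA : w \in A by move: wBA; rewrite mem_cat wB.
    rewrite ltn_add2l => H; by apply: (sorted_ltn_index trlt sA).
  have su := side u uL iuL; have sv := side v vL ivL.
  move: su sv; case: (h \in B) => su sv; by clear -su sv xu xv; lia.
have Le : L = level ms c by rewrite /L ce.
have su := sorted_ltn_index trgt Sc; rewrite -Le in su.
have := su u h uL hL iuL. by clear -xu; lia.
Qed.

Lemma conn_induced (W : pred mon) (V : seq mon) :
  (forall x, W x = (x \in V)) ->
  (forall a b, a \in V -> b \in V -> conn W a b) -> induced_connected V.
Proof.
move=> WV H a b aV bV; have [p [Wa Wp Pp Lp]] := H a b aV bV.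
exists p; split => //.
elim: p a Wa Wp Pp {Lp aV H} => [|y p IH] a Wa //= /andP[Wy Wp] /andP[ay Pp].
by rewrite ay -WV Wy /=; apply: IH.
Qed.

Unset Implicit Arguments.

Theorem mainTheorem5 (k : fieldType) (d : nat) (ms : seq mon) :
  uniq ms ->
  all (fun m => mdeg m == d) ms ->
  linear_resolution k d ms ->
  tree_ordered ms ->
  forall j : nat, (2 <= j <= size ms)%N ->
  forall u v : mon,
    u \in mingens (take j ms) -> v \in mingens (take j ms) ->
    zdeg u = zdeg v ->
    induced_connected (GJfg_vertices (take j ms) u v).
Proof.
move=> Uq Deg LR TO j /andP[j2 jle] u v.
have degT : forall x, x \in take j ms -> mdeg x = d.
  by move=> x /mem_take xm; apply: degP Deg x xm.
have mg : forall h, (h \in mingens (take j ms)) = (h \in take j ms).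
  move=> h; rewrite /mingens mem_filter mem_undup.
  case hT: (h \in take j ms); rewrite ?andbF ?andbT //.
  apply/hasPn => g gT; apply/negP => /andP[gh gd].
  move: gh; rewrite (mdiv_eq gd) ?eqxx //.
  by rewrite (degT _ hT) (degT _ gT).
rewrite !mg => uT vT zuv.
have um : u \in ms by apply: mem_take uT.
have vm : v \in ms by apply: mem_take vT.
set b := mlcm u v.
have iu := index_take_lt uT; have iv := index_take_lt vT.
apply: (@conn_induced (Vb ms b)).
  move=> h; rewrite /Vb /GJfg_vertices mem_filter mg andbC.
  case hd: (mdivides h b) => //=; rewrite ?andbF //.
  apply/idP/idP; last by apply: mem_take.
  move=> hm; apply: index_lt_take => //.
  rewrite ltnNge; apply/negP => ih.
  have hu : index u ms < index h ms by apply: leq_trans ih.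
  have hv : index v ms < index h ms by apply: leq_trans ih.
  have zh : zdeg h <= zdeg u.
    move: hd zuv; rewrite /b; clear b; case: h {hm ih hu hv} => [[h1 h2] h3];
    case: u {um uT iu} => [[u1 u2] u3]; case: v {vm vT iv} => [[v1 v2] v3].
    rewrite /mdivides /mlcm /xdeg /ydeg /zdeg /=. lia.
  case: (ltngtP (zdeg h) (zdeg u)) zh => // zh _.
    have tr : transitive (fun a b : mon => zdeg a <= zdeg b).
      by move=> x y z; apply: leq_trans.
    have rf : reflexive (fun a b : mon => zdeg a <= zdeg b) by move=> x; apply: leqnn.
    have := sorted_leq_index tr rf TO.1 _ _ um hm (ltnW hu).
    by rewrite leqNgt zh.
  have du := degP Deg um; have dv := degP Deg vm; have dh := degP Deg hm.
  have hnu : h != u by apply/eqP => E; move: hu; rewrite E ltnn.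
  have hnv : h != v by apply/eqP => E; move: hv; rewrite E ltnn.
  have I1 := interval TO um vm hm (esym zh) (etrans (esym zuv) (esym zh)) hu hv.
  have I2 := interval TO vm um hm (etrans (esym zuv) (esym zh)) (esym zh) hv hu.
  move: hd du dv dh hnu hnv zh zuv I1 I2; rewrite /b; clear b.
  case: h {hm ih hu hv} => [[h1 h2] h3];
  case: u {um uT iu} => [[u1 u2] u3]; case: v {vm vT iv} => [[v1 v2] v3].
  rewrite /mdivides /mlcm /mdeg /xdeg /ydeg /zdeg /= !xpair_eqE => H1 H2 H3 H4 H5 H6 H7 H8 I1 I2.
  lia.
move=> a c; rewrite /GJfg_vertices !mem_filter ?mg => /andP[ab aT] /andP[cb cT].
apply: (@conn_mono (Vb ms (mlcm a c))); last first.
  apply: (@main_conn k d ms Deg LR (mdeg (mlcm a c)) a c) => //.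
  - by move: aT => /andP[_]; rewrite mem_undup; apply: mem_take.
  - by move: cT => /andP[_]; rewrite mem_undup; apply: mem_take.
move=> x /andP[xm xd]; rewrite /Vb xm /=.
by apply: (mdiv_trans xd); apply: mdiv_lcm.
Qed.
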